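(* For all integers $m \ge 1$ and $n \ge 1$, $$\mathrm{Var}[\xi_{m,n}] = (m-1)\cdot S_{m,n}.$$
   Context: Let $m\ge 1$, $n\ge 1$ be integers and let $\{\alpha_1,\dots,\alpha_m\}$ be an alphabet of $m$ symbols. A random string is generated as follows: starting from the empty string, repeatedly append a symbol chosen uniformly at random from the alphabet (independently of all previous choices), and stop at the first moment the string ends with $n$ consecutive copies of $\alpha_1$. The random variable $\xi_{m,n}$ is the length of the resulting string. Let $G_{m,n}=(V,E)$ be the complete $m$-ary rooted tree of height $n$ (the root is at level $0$, every node at level $<n$ has exactly $m$ children, and there are $m^d$ nodes at level $d$ for $0\le d\le n$; $V$ includes the root). For $v\in V$, $\pi(v)\subseteq E$ denotes the set of edges of the unique path from $v$ to the root. Define $S_{m,n} := \sum_{(a,b)\in V\times V} |\pi(a)\cap\pi(b)|$ (the sum over all ordered pairs of nodes, including pairs with $a=b$). *)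

(* Defs.v *)
From Stdlib Require Import Reals.
From Coquelicot Require Import Coquelicot.
From mathcomp Require Import all_boot.

Set Implicit Arguments.
Unset Strict Implicit.
Unset Printing Implicit Defensive.
Local Open Scope nat_scope.

(* Alphabet {alpha_1,...,alpha_m} is 'I_m; alpha_1 is the symbol with value 0. *)

Definition ends_with_run (n : nat) (s : seq nat) : bool :=
  (n <= size s) && all (fun x => x == 0) (drop (size s - n) s).

Definition first_stop (n : nat) (s : seq nat) : bool :=
  ends_with_run n s && all (fun j => ~~ ends_with_run n (take j s)) (iota 0 (size s)).

(* P[xi_{m,n} = k]: each string of length k is produced with probability m^-k *)
Definition xi_pmf (m n k : nat) : R :=
  Rdiv (INR #|[set w : k.-tuple 'I_m | first_stop n (map val w)]|) (pow (INR m) k).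

(* Complete m-ary tree of height n: nodes are words over 'I_m of length <= n
   (root = empty word, children of v are rcons v i).  The edge between a node
   v of level j+1 and its parent is the pair (parent, child).
   pi(v) = edges on the path from v to the root. *)
Definition path_edges (m : nat) (v : seq 'I_m) : seq (seq 'I_m * seq 'I_m) :=
  [seq (take j v, take j.+1 v) | j <- iota 0 (size v)].

(* |pi(a) ∩ pi(b)| (path_edges a is duplicate-free) *)
Definition common_edges (m : nat) (a b : seq 'I_m) : nat :=
  size [seq e <- path_edges a | e \in path_edges b].

Definition S_tree (m n : nat) : nat :=
  \sum_(d1 < n.+1) \sum_(d2 < n.+1)
    \sum_(a : d1.-tuple 'I_m) \sum_(b : d2.-tuple 'I_m)
      common_edges (tval a) (tval b).

(* Main.v *)
Require Import Defs.
From Stdlib Require Import Reals.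
From Coquelicot Require Import Coquelicot.
From Stdlib Require Import Lra Psatz.
From mathcomp Require Import all_boot zify.
Set Implicit Arguments. Unset Strict Implicit. Unset Printing Implicit Defensive.
Local Open Scope nat_scope.

Section Tup.
Variable m : nat.

Lemma sum_tuple_cons K (F : seq 'I_m -> nat) :
  \sum_(t : K.+1.-tuple 'I_m) F t = \sum_(x : 'I_m) \sum_(w : K.-tuple 'I_m) F (x :: w).
Proof.
rewrite pair_big /=.
pose f (p : 'I_m * K.-tuple 'I_m) : K.+1.-tuple 'I_m := [tuple of p.1 :: p.2].
pose g (t : K.+1.-tuple 'I_m) : 'I_m * K.-tuple 'I_m := (thead t, [tuple of behead t]).
rewrite (reindex f) /=; first by [].
exists g => [[x w] _|t _]; first by congr pair; apply: val_inj.
by case/tupleP: t => x w; apply: val_inj.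
Qed.

Lemma sum_tuple_rev K (F : seq 'I_m -> nat) :
  \sum_(t : K.-tuple 'I_m) F t = \sum_(t : K.-tuple 'I_m) F (rev t).
Proof.
rewrite (reindex_inj (h := fun t : K.-tuple 'I_m => [tuple of rev t])) //.
by move=> t1 t2 /(congr1 val) /= /(congr1 rev); rewrite !revK => /val_inj.
Qed.

Lemma sum_tuple_rcons K (F : seq 'I_m -> nat) :
  \sum_(t : K.+1.-tuple 'I_m) F t = \sum_(w : K.-tuple 'I_m) \sum_(x : 'I_m) F (rcons w x).
Proof.
rewrite sum_tuple_rev (sum_tuple_cons _ (fun s => F (rev s))) exchange_big /=.
rewrite (sum_tuple_rev K (fun w => \sum_(x : 'I_m) F (rcons w x))).
by apply: eq_bigr => w _; apply: eq_bigr => x _; rewrite rev_cons.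
Qed.

Lemma sum_tuple_const K c : \sum_(t : K.-tuple 'I_m) c = m ^ K * c.
Proof. by rewrite sum_nat_const card_tuple card_ord. Qed.

End Tup.
Definition runf (r x : nat) := if x == 0 then r.+1 else 0.
Definition run (s : seq nat) := foldl runf 0 s.
Definition alive n (s : seq nat) :=
  all (fun j => ~~ ends_with_run n (take j s)) (iota 0 (size s).+1).

Lemma run_rcons s x : run (rcons s x) = runf (run s) x.
Proof. by rewrite /run foldl_rcons. Qed.

Lemma ends_run0 s : ends_with_run 0 s.
Proof. by rewrite /ends_with_run subn0 drop_size. Qed.

Lemma ends_run_rcons n s x :
  ends_with_run n.+1 (rcons s x) = (x == 0) && ends_with_run n s.
Proof.
rewrite /ends_with_run size_rcons ltnS subSS drop_rcons ?leq_subr // all_rcons.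
by case: (x == 0); case: (n <= size s).
Qed.

Lemma ends_runE n s : ends_with_run n s = (n <= run s).
Proof.
elim/last_ind: s n => [|s x IH] n; first by rewrite /ends_with_run /= andbT.
case: n => [|n]; first by rewrite ends_run0.
rewrite ends_run_rcons IH run_rcons /runf.
by case: (x == 0).
Qed.

Lemma take_rcons_le s (x : nat) j : j <= size s -> take j (rcons s x) = take j s.
Proof. by move=> h; rewrite -cats1 takel_cat. Qed.

Lemma alive_rcons n s x :
  alive n (rcons s x) = alive n s && ~~ ends_with_run n (rcons s x).
Proof.
rewrite /alive size_rcons -[(size s).+2]addn1 iotaD all_cat add0n.
congr andb; last by rewrite /= andbT -(size_rcons s x) take_size.
apply: eq_in_all => j; rewrite mem_iota add0n ltnS => hj.
by rewrite take_rcons_le.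
Qed.

Lemma first_stop_rcons n s x :
  first_stop n (rcons s x) = ends_with_run n (rcons s x) && alive n s.
Proof.
rewrite /first_stop /alive size_rcons; congr andb.
apply: eq_in_all => j; rewrite mem_iota add0n ltnS => hj.
by rewrite take_rcons_le.
Qed.

Lemma alive_run n s : alive n s -> run s < n.
Proof.
move=> /allP /(_ (size s)); rewrite mem_iota add0n ltnS leqnn take_size ends_runE.
by move=> /(_ isT); rewrite -ltnNge.
Qed.

Section Counts.
Variables (m n : nat).

Definition Acnt K j := \sum_(w : K.-tuple 'I_m) (alive n (map val w) && (run (map val w) == j)).
Definition Zcnt K := \sum_(w : K.-tuple 'I_m) (first_stop n (map val w) : nat).

Lemma card_Z K : #|[set w : K.-tuple 'I_m | first_stop n (map val w)]| = Zcnt K.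
Proof.
rewrite -sum1_card big_mkcond /=; apply: eq_bigr => w _.
by rewrite inE; case: (first_stop _ _).
Qed.

Lemma sum_tuple0 (F : seq 'I_m -> nat) : \sum_(w : 0.-tuple 'I_m) F w = F [::].
Proof.
rewrite (eq_bigr (fun _ => F [::])) ?sum_tuple_const ?mul1n // => w _.
by rewrite (size0nil (size_tuple w)).
Qed.

End Counts.

Section Rec.
Variables (m' n : nat).
Hypothesis hn : 0 < n.
Local Notation m := m'.+1.

Lemma sum_ord_eq0 b : \sum_(x : 'I_m) ((val x == 0) && b : nat) = b.
Proof.
rewrite big_ord_recl /= big1 ?addn0 //.
Qed.

Lemma sum_ord_neq0 b : \sum_(x : 'I_m) ((val x != 0) && b : nat) = m' * b.
Proof.
rewrite big_ord_recl /= add0n (eq_bigr (fun _ => b : nat)) ?sum_nat_const ?card_ord //.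
Qed.

Lemma sum_eq_j (b : bool) r : (b -> r < n) -> \sum_(j < n) (b && (r == j) : nat) = b.
Proof.
case: b => [/(_ isT) hr|_]; last by rewrite big1.
rewrite (bigD1 (Ordinal hr)) //= eqxx big1 ?addn0 // => j hj.
by case: eqP => // h; case/eqP: hj; apply: val_inj.
Qed.

Lemma Acnt0 j : Acnt m n 0 j = (j == 0).
Proof.
rewrite /Acnt (sum_tuple0 (fun w : seq 'I_m => (alive n (map val w) && (run (map val w) == j) : nat))) /= /alive /= /run /=.
by rewrite ends_runE /run /= -ltnNge hn eq_sym.
Qed.

Lemma Zcnt0 : Zcnt m n 0 = 0.
Proof.
by rewrite /Zcnt (sum_tuple0 (fun w : seq 'I_m => (first_stop n (map val w) : nat))) /= /first_stop ends_runE /run /= leqn0 andbT; case: eqP hn => // ->.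
Qed.

Lemma Acnt_S0 K : Acnt m n K.+1 0 = m' * \sum_(j < n) Acnt m n K j.
Proof.
rewrite /Acnt (sum_tuple_rcons _ (fun w : seq 'I_m => (alive n (map val w) && (run (map val w) == 0) : nat))).
rewrite [in RHS]exchange_big big_distrr /=.
apply: eq_bigr => w _.
rewrite sum_eq_j; last by move=> /alive_run.
rewrite -sum_ord_neq0; apply: eq_bigr => x _.
rewrite map_rcons alive_rcons ends_runE run_rcons /runf.
case: (val x == 0) => /=; first by rewrite andbF.
by rewrite andbT -ltnNge hn andbT.
Qed.

Lemma Acnt_SS K j : j.+1 < n -> Acnt m n K.+1 j.+1 = Acnt m n K j.
Proof.
move=> hj; rewrite /Acnt (sum_tuple_rcons _ (fun w : seq 'I_m => (alive n (map val w) && (run (map val w) == j.+1) : nat))); apply: eq_bigr => w _.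
rewrite -sum_ord_eq0; apply: eq_bigr => x _.
rewrite map_rcons alive_rcons ends_runE run_rcons /runf.
case: (val x == 0) => /=; last by rewrite andbF.
move: (alive _ _) (run _) => a r; case: a => //=.
rewrite eqSS; case: eqP => [->|_]; last by rewrite andbF.
by rewrite -ltnNge hj.
Qed.

Lemma Zcnt_S K : Zcnt m n K.+1 = Acnt m n K n.-1.
Proof.
rewrite /Zcnt /Acnt (sum_tuple_rcons _ (fun w : seq 'I_m => (first_stop n (map val w) : nat))); apply: eq_bigr => w _.
rewrite -sum_ord_eq0; apply: eq_bigr => x _.
rewrite map_rcons first_stop_rcons ends_runE run_rcons /runf.
case: (val x == 0) => /=; last by rewrite leqn0; case: eqP hn => // ->.
case ha: (alive n _) => /=; last by rewrite !andbF.
have := alive_run ha; move: (run _) => r hr.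
rewrite andbT; congr nat_of_bool; apply/idP/eqP; lia.
Qed.

End Rec.

Section Tree.
Variable m : nat.

Definition phi (x : 'I_m) (e : seq 'I_m * seq 'I_m) := (x :: e.1, x :: e.2).

Lemma phi_inj x : injective (phi x).
Proof. by move=> [a b] [c d] [-> ->]. Qed.

Lemma path_edges_cons x (a : seq 'I_m) :
  path_edges (x :: a) = ([::], [:: x]) :: map (phi x) (path_edges a).
Proof.
rewrite /path_edges /=; congr cons.
  by rewrite take0.
have -> : iota 1 (size a) = map (addn 1) (iota 0 (size a)) by rewrite -iotaDl.
by rewrite -!map_comp; apply: eq_map => j.
Qed.

Lemma ce_nil_l (b : seq 'I_m) : common_edges [::] b = 0.
Proof. by []. Qed.

Lemma ce_nil_r (a : seq 'I_m) : common_edges a [::] = 0.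
Proof. by rewrite /common_edges /= size_filter; apply/eqP; rewrite -leqn0 leqNgt -has_count; apply/hasP => -[]. Qed.

Lemma ce_cons x y (a b : seq 'I_m) :
  common_edges (x :: a) (y :: b) = if x == y then (common_edges a b).+1 else 0.
Proof.
rewrite /common_edges !path_edges_cons /=.
have h0 : (([::], [:: x]) \in ([::], [:: y]) :: map (phi y) (path_edges b)) = (x == y).
  rewrite in_cons; case: (x =P y) => [->|hne]; first by rewrite eqxx.
  apply/negbTE; rewrite negb_or; apply/andP; split.
    by apply/eqP => -[] /hne.
  by apply/mapP => -[e _] [].
rewrite h0; case: (x =P y) => [<-|hne] /=.
  congr S; rewrite filter_map size_map; congr size; apply: eq_filter => e /=.
by rewrite in_cons mem_map; last exact: phi_inj.
rewrite size_filter; apply/eqP; rewrite -leqn0 leqNgt -has_count; apply/hasP => -[e].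
move=> /mapP [e' _ ->]; rewrite in_cons => /orP [//|/mapP [e'' _]] [] /hne //.
Qed.

Lemma sum_if_eq (x : 'I_m) c : \sum_(y : 'I_m) (if x == y then c else 0) = c.
Proof.
rewrite (bigD1 x) //= eqxx big1 ?addn0 // => y hy.
by rewrite eq_sym (negbTE hy).
Qed.

Definition Tpair d1 d2 := \sum_(a : d1.-tuple 'I_m) \sum_(b : d2.-tuple 'I_m) common_edges (tval a) (tval b).

Lemma Tpair0l d2 : Tpair 0 d2 = 0.
Proof. by rewrite /Tpair big1 // => a _; rewrite big1 // => b _; rewrite (size0nil (size_tuple a)). Qed.

Lemma Tpair0r d1 : Tpair d1 0 = 0.
Proof. by rewrite /Tpair big1 // => a _; rewrite big1 // => b _; rewrite (size0nil (size_tuple b)) ce_nil_r. Qed.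

Lemma TpairSS i j : Tpair i.+1 j.+1 = m * (Tpair i j + m ^ i * m ^ j).
Proof.
rewrite /Tpair (sum_tuple_cons _ (fun a => \sum_(b : j.+1.-tuple 'I_m) common_edges a b)).
rewrite (eq_bigr (fun x => \sum_(a : i.-tuple 'I_m) \sum_(b : j.-tuple 'I_m) (common_edges a b).+1)).
  rewrite sum_nat_const card_ord; congr muln.
  rewrite -sum_tuple_const -big_split /=.
  apply: eq_bigr => a _; rewrite -[m ^ j]muln1 -sum_tuple_const -big_split /=.
  by apply: eq_bigr => b _; rewrite addn1.
move=> x _; apply: eq_bigr => a _.
rewrite (sum_tuple_cons _ (fun b => common_edges (x :: a) b)) exchange_big /=.
apply: eq_bigr => b _.
rewrite (eq_bigr (fun y => if x == y then (common_edges a b).+1 else 0)) ?sum_if_eq //.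
by move=> y _; rewrite ce_cons.
Qed.

Definition E i := \sum_(t < i) m ^ t.

Fixpoint U j := if j is j'.+1 then m * U j' + m * (E j) ^ 2 else 0.

Lemma S_tree_U n : S_tree m n = U n.
Proof.
elim: n => [|n IH].
  by rewrite /S_tree !big_ord1; apply: (Tpair0l 0).
have -> : S_tree m n.+1 = \sum_(d1 < n.+2) \sum_(d2 < n.+2) Tpair d1 d2 by [].
rewrite big_ord_recl big1 ?add0n; last by move=> d2 _; exact: Tpair0l.
rewrite (eq_bigr (fun i : 'I_n.+1 => \sum_(j < n.+1) Tpair i.+1 j.+1)); last first.
  by move=> i _; rewrite big_ord_recl Tpair0r add0n.
rewrite (eq_bigr (fun i : 'I_n.+1 => m * \sum_(j < n.+1) (Tpair i j + m ^ i * m ^ j))); last first.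
  by move=> i _; rewrite big_distrr; apply: eq_bigr => j _; rewrite TpairSS.
rewrite -big_distrr /= (eq_bigr (fun i : 'I_n.+1 => \sum_(j < n.+1) Tpair i j + m ^ i * E n.+1)); last first.
  by move=> i _; rewrite big_split /= big_distrr.
rewrite big_split /= -big_distrl /= -/(E n.+1) /=.
have -> : \sum_(i < n.+1) \sum_(j < n.+1) Tpair i j = S_tree m n by [].
rewrite IH mulnDr addnC; congr addn.
Qed.

End Tree.

Local Open Scope R_scope.

Fixpoint sumR (k : nat) (f : nat -> R) : R :=
  match k with O => 0 | S k' => sumR k' f + f k' end.

Lemma sumR_ext k f g : (forall j, (j < k)%N -> f j = g j) -> sumR k f = sumR k g.
Proof.
elim: k => [//|k IH] h /=; rewrite IH ?h // => j hj; apply: h; exact: ltnW.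
Qed.

Lemma sumR_plus k f g : sumR k (fun j => f j + g j) = sumR k f + sumR k g.
Proof. elim: k => [/=|k IH /=]; [ring | rewrite IH; ring]. Qed.

Lemma sumR_minus k f g : sumR k (fun j => f j - g j) = sumR k f - sumR k g.
Proof. elim: k => [/=|k IH /=]; [ring | rewrite IH; ring]. Qed.

Lemma sumR_mulr k f c : sumR k (fun j => f j * c) = sumR k f * c.
Proof. elim: k => [/=|k IH /=]; [ring | rewrite IH; ring]. Qed.

Lemma sumR_shift k f : sumR (S k) f = f O + sumR k (fun j => f (S j)).
Proof.
elim: k => [/=|k IH]; first ring.
have -> : sumR k.+2 f = sumR k.+1 f + f k.+1 by [].
rewrite IH /=; ring.
Qed.

Lemma sumR_le k f g : (forall j, (j < k)%N -> f j <= g j) -> sumR k f <= sumR k g.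
Proof.
elim: k => [_ /=|k IH h /=]; first lra.
apply: Rplus_le_compat; [apply: IH => j hj; apply: h; exact: ltnW | exact: h].
Qed.

Lemma sumR_zero k f : (forall j, (j < k)%N -> f j = 0) -> sumR k f = 0.
Proof.
move=> h; rewrite (sumR_ext (g := fun _ => 0)) //.
elim: k {h} => [//|k IH /=]; rewrite IH; ring.
Qed.

Lemma sumR_ge0 k f : (forall j, (j < k)%N -> 0 <= f j) -> 0 <= sumR k f.
Proof. move=> h; rewrite -(sumR_zero (k := k) (f := fun _ => 0)) //; exact: sumR_le. Qed.

Lemma sumR_term k f j : (forall i, (i < k)%N -> 0 <= f i) -> (j < k)%N -> f j <= sumR k f.
Proof.
elim: k => [//|k IH] h hj /=.
case: (ltnP j k) => hjk.
  have := IH (fun i hi => h i (ltnW hi)) hjk; have := h k (ltnSn k); lra.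
have -> : j = k by apply/eqP; rewrite eqn_leq hjk -ltnS hj.
have := sumR_ge0 (fun i hi => h i (ltnW hi)); lra.
Qed.

Lemma INR_sum n (f : 'I_n -> nat) (g : nat -> nat) :
  (forall j : 'I_n, f j = g j) -> INR (\sum_(j < n) f j) = sumR n (fun j => INR (g j)).
Proof.
move=> h; rewrite (eq_bigr (fun j : 'I_n => g j)) // {f h}.
elim: n => [|n IH]; first by rewrite big_ord0.
by rewrite big_ord_recr /= plus_INR IH.
Qed.

Lemma INR_muln a b : INR (a * b) = INR a * INR b.
Proof. exact: mult_INR. Qed.

Lemma INR_addn a b : INR (a + b) = INR a + INR b.
Proof. exact: plus_INR. Qed.

Lemma INR_expn a b : INR (a ^ b) = INR a ^ b.
Proof. elim: b => [//|b IH]; rewrite expnS INR_muln IH /=; ring. Qed.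

Lemma bernoulli (t : R) K : 1 <= t -> 1 + INR K * (t - 1) <= t ^ K.
Proof.
move=> ht; elim: K => [/=|K IH]; first lra.
rewrite S_INR /=.
have h0 : 0 <= INR K := pos_INR K.
have h1 : 0 <= (t - 1) * (INR K * (t - 1)) by apply: Rmult_le_pos; [lra | apply: Rmult_le_pos; lra].
have h2 : 0 <= t * (t ^ K - (1 + INR K * (t - 1))) by apply: Rmult_le_pos; lra.
nra.
Qed.

Lemma lim_poly_geom q : 0 <= q < 1 -> is_lim_seq (fun K => (INR K ^ 2 + 1) * q ^ K) 0.
Proof.
move=> [hq0 hq1].
set r := (2 + q) / 3.
have hr0 : 0 < r by rewrite /r; lra.
have hr1 : r < 1 by rewrite /r; lra.
have hqr : q <= r ^ 3.
  rewrite /r; have : 0 <= (1 - q) ^ 2 * (q + 8) by apply: Rmult_le_pos; [apply: pow2_ge_0 | lra].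
  move=> h; simpl; nra.
set d := / r - 1.
have hd : 0 < d.
  rewrite /d; have : 1 < / r by rewrite -Rinv_1; apply: Rinv_lt_contravar; lra.
  lra.
have hK : forall K, INR K * r ^ K * d <= 1.
  move=> K; have hb := bernoulli K (t := / r) ltac:(have : 1 < / r by (rewrite -Rinv_1; apply: Rinv_lt_contravar; lra); lra).
  have hrK : 0 < r ^ K := pow_lt _ _ hr0.
  have h1 : (/ r) ^ K * r ^ K = 1.
    by rewrite -Rpow_mult_distr Rinv_l ?pow1 //; lra.
  have h0 : 0 <= INR K := pos_INR K.
  rewrite -/d in hb.
  nra.
apply: (is_lim_seq_le_le (fun _ => 0) _ (fun K => (/ d ^ 2 + 1) * r ^ K)).
  move=> K; split.
    apply: Rmult_le_pos; [have := pos_INR K; nra | exact: pow_le].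
  have hqK : q ^ K <= (r ^ K) ^ 3.
    rewrite -pow_mult Nat.mul_comm pow_mult; apply: pow_incr; lra.
  have hrK : 0 < r ^ K := pow_lt _ _ hr0.
  have h0 : 0 <= INR K := pos_INR K.
  have hx := hK K.
  have hKr : INR K * r ^ K <= / d.
    apply: (Rmult_le_reg_r d) => //; rewrite Rinv_l; lra.
  have hKr0 : 0 <= INR K * r ^ K by nra.
  have hsq : (INR K * r ^ K) ^ 2 <= (/ d) ^ 2 by apply: pow_incr; lra.
  rewrite pow_inv in hsq.
  have e : (INR K ^ 2 + 1) * (r ^ K) ^ 3 = (INR K * r ^ K) ^ 2 * r ^ K + r ^ K * (r ^ K) ^ 2.
    ring.
  have hrK1 : r ^ K <= 1 by rewrite -(pow1 K); apply: pow_incr; lra.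
  have : (INR K ^ 2 + 1) * q ^ K <= (INR K ^ 2 + 1) * (r ^ K) ^ 3.
    apply: Rmult_le_compat_l => //; nra.
  have : r ^ K * (r ^ K) ^ 2 <= r ^ K by nra.
  have : (INR K * r ^ K) ^ 2 * r ^ K <= / d ^ 2 * r ^ K by apply: Rmult_le_compat_r; lra.
  nra.
  exact: is_lim_seq_const.
have := is_lim_seq_scal_l _ (/ d ^ 2 + 1) _ (is_lim_seq_geom r ltac:(rewrite Rabs_right; lra)).
by rewrite /= Rmult_0_r.
Qed.

Lemma E_0 mm : E mm 0 = 0%N.
Proof. by rewrite /E big_ord0. Qed.

Lemma E_S mm j : E mm j.+1 = (1 + mm * E mm j)%N.
Proof.
rewrite /E big_ord_recl expn0; congr addn.
by rewrite big_distrr; apply: eq_bigr => i _ /=; rewrite /bump /= add1n expnS.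
Qed.

Lemma E_mono mm j k : (0 < mm)%N -> (j <= k)%N -> (E mm j <= E mm k)%N.
Proof.
move=> hm; elim: k => [|k IH]; first by rewrite leqn0 => /eqP ->.
rewrite leq_eqVlt => /orP [/eqP -> //|hjk].
have := IH hjk; rewrite E_S; nia.
Qed.

Lemma U_mono mm j k : (0 < mm)%N -> (j <= k)%N -> (U mm j <= U mm k)%N.
Proof.
move=> hm; elim: k => [|k IH]; first by rewrite leqn0 => /eqP ->.
rewrite leq_eqVlt => /orP [/eqP -> //|hjk].
have := IH hjk; rewrite /= -/(U mm k); nia.
Qed.

Lemma DE_lt mm j n0 : (0 < mm)%N -> (j < n0)%N -> (mm * E mm j + 1 <= mm * E mm n0)%N.
Proof.
move=> hm hj; have := E_mono hm hj; rewrite E_S => h.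
nia.
Qed.

Section Chain.
Variables (m' n' : nat).
Local Notation m := m'.+1.
Local Notation n := n'.+1.
Let M := INR m.

Lemma M_pos : 0 < M.
Proof. rewrite /M; apply: lt_0_INR; lia. Qed.

Lemma M_ge1 : 1 <= M.
Proof. rewrite /M S_INR; have := pos_INR m'; lra. Qed.

Lemma M_neq0 : M <> 0.
Proof. have := M_pos; lra. Qed.

Definition aa K j := INR (Acnt m n K j) / M ^ K.
Definition pz K := INR (Zcnt m n K) / M ^ K.

Lemma aa_ge0 K j : 0 <= aa K j.
Proof. rewrite /aa; apply: Rdiv_le_0_compat; [exact: pos_INR | apply: pow_lt; exact: M_pos]. Qed.

Lemma aa_0 j : aa 0%N j = if j == 0%N then 1 else 0.
Proof. by rewrite /aa Acnt0 //=; case: (j == 0%N) => /=; field. Qed.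

Lemma pz_0 : pz 0%N = 0.
Proof. by rewrite /pz Zcnt0 //=; field. Qed.

Lemma aa_S0 K : aa K.+1 0%N = (M - 1) / M * sumR n (aa K).
Proof.
rewrite /aa Acnt_S0 // INR_muln (INR_sum (g := fun j => Acnt m n K j)) //.
have -> : INR m' = M - 1 by rewrite /M S_INR; ring.
rewrite -[sumR n (fun j => _ / _)]/(sumR n (fun j => INR (Acnt m n K j) * / M ^ K)).
rewrite sumR_mulr /=; field; split; [apply: pow_nonzero; exact: M_neq0 | exact: M_neq0].
Qed.

Lemma aa_SS K j : (j.+1 < n)%N -> aa K.+1 j.+1 = aa K j / M.
Proof.
move=> hj; rewrite /aa Acnt_SS //=; field; split; [apply: pow_nonzero; exact: M_neq0 | exact: M_neq0].
Qed.

Lemma pz_S K : pz K.+1 = aa K n' / M.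
Proof.
rewrite /pz /aa Zcnt_S //=; field; split; [apply: pow_nonzero; exact: M_neq0 | exact: M_neq0].
Qed.

Lemma step (F : nat -> R) K :
  sumR n (fun j => aa K.+1 j * F j) + pz K.+1 * F n =
  sumR n (fun j => aa K j * ((M - 1) / M * F 0%N + F j.+1 / M)).
Proof.
rewrite sumR_shift aa_S0 (sumR_ext (k := n') (f := fun j => aa K.+1 j.+1 * F j.+1) (g := fun j => aa K j / M * F j.+1)); last first.
  by move=> j hj; rewrite aa_SS.
rewrite (sumR_ext (k := n) (f := fun j => aa K j * ((M - 1) / M * F 0%N + F j.+1 / M)) (g := fun j => aa K j * ((M - 1) / M * F 0%N) + aa K j / M * F j.+1)); last first.
  by move=> j _; field; exact: M_neq0.
rewrite sumR_plus sumR_mulr pz_S.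
have -> : sumR n (fun j => aa K j / M * F j.+1) = sumR n' (fun j => aa K j / M * F j.+1) + aa K n' / M * F n by [].
ring.
Qed.

Theorem telescope (F : nat -> nat -> R) :
  (forall K j, (j < n)%N -> F K j = (M - 1) / M * F K.+1 0%N + F K.+1 j.+1 / M) ->
  forall K, sum_f_R0 (fun k => F k n * pz k) K + sumR n (fun j => aa K j * F K j) = F 0%N 0%N.
Proof.
move=> hF; elim => [|K IH].
  rewrite [sum_f_R0 _ 0]/= pz_0 sumR_shift aa_0 /= sumR_zero; first ring.
  by move=> j _; rewrite aa_0 /=; ring.
rewrite -IH.
have -> : sum_f_R0 (fun k => F k n * pz k) K.+1 = sum_f_R0 (fun k => F k n * pz k) K + F K.+1 n * pz K.+1 by [].
rewrite Rplus_assoc; congr Rplus; rewrite Rplus_comm Rmult_comm (step (F K.+1)).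
apply: sumR_ext => j hj; by rewrite (hF K j hj).
Qed.


Definition Ee j := INR (E m j).
Definition Dd j := M * Ee j.
Definition HH := Dd n.
Definition Uu j := INR (U m j).

Lemma Ee_S j : Ee j.+1 = 1 + M * Ee j.
Proof. by rewrite /Ee E_S INR_addn INR_muln. Qed.

Lemma Dd_0 : Dd 0%N = 0.
Proof. by rewrite /Dd /Ee E_0 /=; ring. Qed.

Lemma Uu_S j : Uu j.+1 = M * Uu j + M * Ee j.+1 ^ 2.
Proof. by rewrite /Uu /= INR_addn !INR_muln /Ee /M; ring. Qed.

Lemma Ee_ge0 j : 0 <= Ee j.
Proof. exact: pos_INR. Qed.

Lemma Dd_ge0 j : 0 <= Dd j.
Proof. rewrite /Dd; have := M_pos; have := Ee_ge0 j; nra. Qed.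

Lemma Dd_lt j : (j < n)%N -> Dd j + 1 <= HH.
Proof.
move=> hj; rewrite /HH /Dd /Ee /M -INR_muln -S_INR -addn1 -INR_muln.
by apply: le_INR; apply/leP; apply: DE_lt.
Qed.

Lemma HH_ge1 : 1 <= HH.
Proof. have := Dd_lt (ltn0Sn n'); rewrite Dd_0; lra. Qed.

Lemma Uu_le j : (j <= n)%N -> Uu j <= Uu n.
Proof. by move=> hj; apply: le_INR; apply/leP; apply: U_mono. Qed.

Lemma Uu_ge0 j : 0 <= Uu j.
Proof. exact: pos_INR. Qed.

Definition F1 K j := INR K + HH - Dd j.
Definition F2 K j := (INR K - Dd j) ^ 2 + (M - 1) * (Uu n - Uu j).

Lemma F1_id K j : (j < n)%N -> F1 K j = (M - 1) / M * F1 K.+1 0%N + F1 K.+1 j.+1 / M.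
Proof.
move=> _; rewrite /F1 Dd_0 /Dd Ee_S S_INR; field; exact: M_neq0.
Qed.

Lemma F2_id K j : (j < n)%N -> F2 K j = (M - 1) / M * F2 K.+1 0%N + F2 K.+1 j.+1 / M.
Proof.
move=> _; rewrite /F2 Dd_0 (Uu_S j) /Dd (Ee_S j) S_INR (_ : Uu 0%N = 0) //; field; exact: M_neq0.
Qed.

Definition hf j := HH - Dd j.
Definition Phi K := sumR n (fun j => aa K j * hf j).
Definition ss K := sumR n (aa K).

Lemma Phi_S K : Phi K.+1 = Phi K - ss K.
Proof.
have h := step hf K.
have hn0 : hf n = 0 by rewrite /hf /HH; ring.
rewrite hn0 Rmult_0_r Rplus_0_r in h.
rewrite /Phi h /ss -sumR_minus; apply: sumR_ext => j _.
rewrite /hf Dd_0 /Dd Ee_S; field; exact: M_neq0.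
Qed.

Lemma hf_bounds j : (j < n)%N -> 1 <= hf j <= HH.
Proof. move=> hj; rewrite /hf; have := Dd_lt hj; have := Dd_ge0 j; lra. Qed.

Lemma Phi_le K : Phi K <= HH * ss K.
Proof.
rewrite /Phi /ss Rmult_comm -sumR_mulr; apply: sumR_le => j hj.
have := hf_bounds hj; have := aa_ge0 K j; nra.
Qed.

Lemma ss_le K : ss K <= Phi K.
Proof.
rewrite /Phi /ss; apply: sumR_le => j hj.
have := hf_bounds hj; have := aa_ge0 K j; nra.
Qed.

Lemma Phi_0 : Phi 0%N = HH.
Proof.
rewrite /Phi sumR_shift aa_0 /= sumR_zero; first by rewrite /hf Dd_0; ring.
by move=> j _; rewrite aa_0 /=; ring.
Qed.

Lemma Phi_bound K : Phi K <= (1 - / HH) ^ K * HH.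
Proof.
have hH := HH_ge1.
elim: K => [|K IH]; first by rewrite Phi_0 /=; lra.
rewrite Phi_S /=.
have h1 := Phi_le K.
have h2 : Phi K / HH <= ss K.
  apply: (Rmult_le_reg_r HH); first lra.
  rewrite /Rdiv Rmult_assoc Rinv_l; lra.
have h3 : 0 <= 1 - / HH.
  have : / HH <= 1 by rewrite -Rinv_1; apply: Rinv_le_contravar; lra.
  lra.
have : Phi K - ss K <= (1 - / HH) * Phi K.
  have -> : (1 - / HH) * Phi K = Phi K - Phi K / HH by field; lra.
  lra.
have : (1 - / HH) * Phi K <= (1 - / HH) * ((1 - / HH) ^ K * HH) by apply: Rmult_le_compat_l.
lra.
Qed.

Lemma rem_bound (F : nat -> nat -> R) (B : nat -> R) :
  (forall K j, (j < n)%N -> 0 <= F K j <= B K) ->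
  forall K, 0 <= sumR n (fun j => aa K j * F K j) <= B K * ((1 - / HH) ^ K * HH).
Proof.
move=> hB K; split.
  apply: sumR_ge0 => j hj; have := hB K j hj; have := aa_ge0 K j; nra.
have hB0 : 0 <= B K by have := hB K 0%N (ltn0Sn _); lra.
apply: (Rle_trans _ (sumR n (fun j => aa K j * B K))).
  apply: sumR_le => j hj; have := hB K j hj; have := aa_ge0 K j; nra.
rewrite sumR_mulr -/(ss K) Rmult_comm.
apply: Rmult_le_compat_l => //.
exact: (Rle_trans _ _ _ (ss_le K) (Phi_bound K)).
Qed.

Lemma series_of (F : nat -> nat -> R) (B : nat -> R) :
  (forall K j, (j < n)%N -> F K j = (M - 1) / M * F K.+1 0%N + F K.+1 j.+1 / M) ->
  (forall K j, (j < n)%N -> 0 <= F K j <= B K) ->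
  is_lim_seq (fun K => B K * ((1 - / HH) ^ K * HH)) 0 ->
  is_series (fun k => F k n * pz k) (F 0%N 0%N).
Proof.
move=> hid hB hl.
have hr : is_lim_seq (fun K => sumR n (fun j => aa K j * F K j)) 0.
  apply: (is_lim_seq_le_le (fun _ => 0) _ _ _ _ (is_lim_seq_const 0) hl).
  exact: rem_bound hB.
have := is_lim_seq_minus' _ _ _ _ (is_lim_seq_const (F 0%N 0%N)) hr.
rewrite Rminus_0_r => h.
apply: (is_lim_seq_ext _ _ _ _ h) => K.
rewrite sum_n_Reals -(telescope hid K); ring.
Qed.

Definition BB K := (INR K + HH) ^ 2 + (M - 1) * Uu n + INR K + HH.

Lemma BB_lim : is_lim_seq (fun K => BB K * ((1 - / HH) ^ K * HH)) 0.
Proof.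
have hH := HH_ge1.
have hM := M_ge1.
have hU := Uu_ge0 n.
set q := 1 - / HH.
have hq : 0 <= q < 1.
  have : / HH <= 1 by rewrite -Rinv_1; apply: Rinv_le_contravar; lra.
  have : 0 < / HH by apply: Rinv_0_lt_compat; lra.
  rewrite /q; lra.
set C := 3 + 2 * HH ^ 2 + (M - 1) * Uu n + 1 + HH.
have := is_lim_seq_scal_l _ (C * HH) _ (lim_poly_geom hq).
rewrite /= Rmult_0_r => hl.
apply: (is_lim_seq_le_le (fun _ => 0) _ _ _ _ (is_lim_seq_const 0) hl) => K.
have hK := pos_INR K.
have hqK : 0 <= q ^ K by apply: pow_le; lra.
have hB : 0 <= BB K by rewrite /BB; have := pow2_ge_0 (INR K + HH); nra.
have hBC : BB K <= C * (INR K ^ 2 + 1).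
  have hc : 0 <= (M - 1) * Uu n by apply: Rmult_le_pos; lra.
  have e1 := pow2_ge_0 (INR K - HH).
  have e2 := pow2_ge_0 (INR K - 1).
  have e3 : 0 <= HH ^ 2 * INR K ^ 2 by apply: Rmult_le_pos; apply: pow2_ge_0.
  have e4 : 0 <= (M - 1) * Uu n * INR K ^ 2 by apply: Rmult_le_pos => //; apply: pow2_ge_0.
  have e5 : 0 <= HH * INR K ^ 2 by apply: Rmult_le_pos; [lra | apply: pow2_ge_0].
  rewrite /BB /C; move: e1 e2 e3 e4 e5 hc; move: ((M - 1) * Uu n) => c.
  simpl; nra.
split; first by apply: Rmult_le_pos => //; apply: Rmult_le_pos; lra.
have : BB K * (q ^ K * HH) <= C * (INR K ^ 2 + 1) * (q ^ K * HH).
  by apply: Rmult_le_compat_r => //; apply: Rmult_le_pos; lra.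
have -> : C * HH * ((INR K ^ 2 + 1) * q ^ K) = C * (INR K ^ 2 + 1) * (q ^ K * HH) by ring.
done.
Qed.

Theorem main_chain :
  is_series (fun k => INR k * pz k) HH /\
  is_series (fun k => (INR k - HH) ^ 2 * pz k) ((M - 1) * Uu n).
Proof.
have hH := HH_ge1.
have hM := M_ge1.
split.
  have h := series_of (F := F1) (B := BB) F1_id _ BB_lim.
  have -> : HH = F1 0%N 0%N by rewrite /F1 Dd_0 /=; ring.
  apply: (is_series_ext _ _ _ _ (h _)) => [k|K j hj].
    by rewrite /F1 /HH; ring_simplify.
  have := hf_bounds hj; rewrite /F1 /BB /hf => hb.
  have := pos_INR K; have := Uu_ge0 n; have := pow2_ge_0 (INR K + HH); nra.
have h := series_of (F := F2) (B := BB) F2_id _ BB_lim.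
have -> : (M - 1) * Uu n = F2 0%N 0%N by rewrite /F2 Dd_0 (_ : Uu 0%N = 0) //=; ring.
apply: (is_series_ext _ _ _ _ (h _)) => [k|K j hj].
  by rewrite /F2 /HH Rminus_diag Rmult_0_r Rplus_0_r.
have hb := hf_bounds hj; rewrite /hf in hb.
have hD := Dd_ge0 j.
have hUj := Uu_le (ltnW hj).
have hU0 := Uu_ge0 j.
have hK := pos_INR K.
have hc : 0 <= (M - 1) * (Uu n - Uu j) by apply: Rmult_le_pos; lra.
have hc2 : (M - 1) * (Uu n - Uu j) <= (M - 1) * Uu n by apply: Rmult_le_compat_l; lra.
have hsq : (INR K - Dd j) ^ 2 <= (INR K + HH) ^ 2.
  apply: pow_maj_Rabs; rewrite Rabs_le_between; lra.
rewrite /F2 /BB; split.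
  have := pow2_ge_0 (INR K - Dd j); lra.
lra.
Qed.

End Chain.

Theorem mainTheorem1 (m n : nat) (hm : (1 <= m)%nat) (hn : (1 <= n)%nat) :
  exists mu : R,
    is_series (fun k : nat => Rmult (INR k) (xi_pmf m n k)) mu /\
    is_series (fun k : nat => Rmult (pow (Rminus (INR k) mu) 2) (xi_pmf m n k))
              (Rmult (INR (m - 1)%nat) (INR (S_tree m n))).
Proof.
case: m hm => [//|m'] _; case: n hn => [//|n'] _.
have [h1 h2] := main_chain m' n'.
exists (HH m' n'); split.
  by apply: (is_series_ext _ _ _ _ h1) => k; rewrite /pz /xi_pmf card_Z.
have -> : INR (m'.+1 - 1) * INR (S_tree m'.+1 n'.+1) = (INR m'.+1 - 1) * Uu m' n'.+1.
  by rewrite subSS subn0 S_tree_U /Uu S_INR; ring.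
by apply: (is_series_ext _ _ _ _ h2) => k; rewrite /pz /xi_pmf card_Z.
Qed.
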